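(* Let $\Gamma$ be a stable group with finite presentation $\langle X\mid R\rangle$, corresponding to the epimorphism $\pi:\mathbb{F}\twoheadrightarrow\Gamma$ from the free group $\mathbb{F}$ on $X$. If $\pi$ is not an isomorphism, then for all $x\ge1$, $$\frac{1}{\|R\|}F_\Gamma^\pi(x)\le H_{\langle X\mid R\rangle}(x)\le F_\Gamma^\pi(x)\,D_{\langle X\mid R\rangle}(F_\Gamma^\pi(x)).$$ If $\pi$ is an isomorphism, then $H_{\langle X\mid R\rangle}(x)=0$ for all $x\ge1$.
   Context: $\ker\pi$ is the normal closure of the finite set $R$. For finite $\Omega$, $d_\Omega(\sigma,\tau)=|\{\omega:\sigma(\omega)\ne\tau(\omega)\}|/|\Omega|$. For $E\subseteq\mathbb{F}$, a homomorphism $\phi:\mathbb{F}\to\mathrm{Sym}(\Omega)$ is a solution for $E$ if $E\subseteq\ker\phi$, and a $(\delta,E)$-almost-solution if $d_\Omega(\phi(r),\mathrm{id})<\delta$ for all $r\in E$; $\rho,\phi$ are $\epsilon$-close if $d_\Omega(\rho(x),\phi(x))<\epsilon$ for all $x\in X$. $\|E\|=\sum_{r\in E}|r|$ (word length in $X$). $F_\Gamma^\pi(x)$ is the infimum of $\|E\|/\delta$ over pairs with $\delta\in(0,1]$, $E\subseteq\ker\pi$ finite, such that every $(\delta,E)$-almost-solution is $x^{-1}$-close to a solution for $\ker\pi$; $\Gamma$ stable means such pairs exist for all $x$. $H_{\langle X\mid R\rangle}(x)$ is the infimum of $1/\delta$ over all $\delta>0$ such that every $(\delta,R)$-almost-solution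 is $x^{-1}$-close to a solution for $\ker\pi$. The Dehn function: $D_{\langle X\mid R\rangle}(n)$ is the maximum, over $w\in\ker\pi$ with $|w|\le n$, of the least $m$ such that $w=\prod_{i=1}^m u_ir_iu_i^{-1}$ with $u_i\in\mathbb{F}$, $r_i\in R^{\pm1}$; it is extended to $[1,\infty)$ by $D(x)=D(\lfloor x\rfloor)$. *)

(* Defs.v *)
From HB Require Import structures.
From mathcomp Require Import all_boot all_order all_algebra all_fingroup.
From mathcomp Require Import classical_sets reals.
Set Implicit Arguments. Unset Strict Implicit. Unset Printing Implicit Defensive.
Import Order.TTheory GRing.Theory Num.Theory.
Local Open Scope ring_scope.

Section FreeGroup.
Variable X : finType.

(* A word in X^{+-1}: a letter (x, b) is x if b = false, x^-1 if b = true.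
   Elements of the free group F on X are words up to free reduction. *)
Definition word := seq (X * bool).

Definition red_step (a : X * bool) (s : word) : word :=
  match s with
  | b :: s' => if (b.1 == a.1) && (b.2 != a.2) then s' else a :: s
  | [::] => [:: a]
  end.

Definition reduce (w : word) : word := foldr red_step [::] w.
Definition reduced (w : word) : bool := reduce w == w.
Definition freely_eq (u v : word) : Prop := reduce u = reduce v.
Definition wlen (w : word) : nat := size (reduce w).

Definition inv_word (w : word) : word := rev (map (fun a => (a.1, ~~ a.2)) w).

(* u r^{+-1} u^{-1} for p = (u, r, e), e = true meaning r^{-1} *)
Definition conj_rel (p : word * word * bool) : word :=
  p.1.1 ++ (if p.2 then inv_word p.1.2 else p.1.2) ++ inv_word p.1.1.

Definition has_area (R : seq word) (w : word) (m : nat) : Prop :=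
  exists l : seq (word * word * bool),
    [/\ size l = m, (forall p, p \in l -> p.1.2 \in R)
      & freely_eq w (flatten (map conj_rel l))].

Definition in_ker (R : seq word) (w : word) : Prop := exists m, has_area R w m.

(* pi : F -> <X | R> is injective (hence an isomorphism) *)
Definition pi_is_iso (R : seq word) : Prop :=
  forall w, in_ker R w -> reduce w = [::].

Definition wnorm (E : seq word) : nat := \sum_(r <- E) wlen r.

Section Perm.
Variable Om : finType.
Definition ev_letter (f : X -> {perm Om}) (a : X * bool) : {perm Om} :=
  if a.2 then ((f a.1)^-1)%g else f a.1.
Definition ev_word (f : X -> {perm Om}) (w : word) : {perm Om} :=
  foldr (fun a acc => (ev_letter f a * acc)%g) 1%g w.

Definition dist {Rr : realType} (s t : {perm Om}) : Rr :=
  (#|[set o | s o != t o]|%:R / #|Om|%:R)%R.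

Definition is_solution_ker (R : seq word) (f : X -> {perm Om}) : Prop :=
  forall w, in_ker R w -> ev_word f w = 1%g.

Definition almost_solution {Rr : realType} (d : Rr) (E : seq word)
  (f : X -> {perm Om}) : Prop :=
  forall r, r \in E -> (dist (ev_word f r) 1%g < d)%R.

Definition eps_close {Rr : realType} (e : Rr) (f g : X -> {perm Om}) : Prop :=
  forall x, (dist (f x) (g x) < e)%R.
End Perm.

Definition good_pair {Rr : realType} (R : seq word) (d : Rr) (E : seq word)
  (x : Rr) : Prop :=
  forall (Om : finType), (0 < #|Om|)%N ->
  forall rho : X -> {perm Om}, almost_solution d E rho ->
  exists phi : X -> {perm Om}, is_solution_ker R phi /\ eps_close (x^-1)%R rho phi.

(* finite subsets E of ker pi, represented as duplicate-free lists of
   reduced words *)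
Definition admissible_E (R : seq word) (E : seq word) : Prop :=
  [/\ all reduced E, uniq E & forall r, r \in E -> in_ker R r].

Definition stable_pres {Rr : realType} (R : seq word) : Prop :=
  forall x : Rr, (0 < x)%R ->
  exists (d : Rr) (E : seq word),
    [/\ (0 < d)%R, (d <= 1)%R, admissible_E R E & good_pair R d E x].

Local Open Scope classical_set_scope.

Definition F_pi {Rr : realType} (R : seq word) (x : Rr) : Rr :=
  inf [set v : Rr | exists (d : Rr) (E : seq word),
         [/\ (0 < d)%R, (d <= 1)%R, admissible_E R E, good_pair R d E x
           & v = ((wnorm E)%:R / d)%R]].

Definition H_pres {Rr : realType} (R : seq word) (x : Rr) : Rr :=
  inf [set v : Rr | exists d : Rr,
         [/\ (0 < d)%R, good_pair R d R x & v = (d^-1)%R]].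

Definition is_area (R : seq word) (w : word) (m : nat) : Prop :=
  has_area R w m /\ forall k, has_area R w k -> (m <= k)%N.

Definition Dehn_nat {Rr : realType} (R : seq word) (n : nat) : Rr :=
  sup [set v : Rr | exists (w : word) (m : nat),
         [/\ in_ker R w, (wlen w <= n)%N, is_area R w m & v = m%:R]].

Definition Dehn {Rr : realType} (R : seq word) (x : Rr) : Rr :=
  Dehn_nat R (Num.truncn x).

End FreeGroup.

(* Main.v *)
Require Import Defs.
From HB Require Import structures.
From mathcomp Require Import all_boot all_order all_algebra all_fingroup.
From mathcomp Require Import classical_sets reals.
From Stdlib Require Classical_Prop.
Import Order.TTheory GRing.Theory Num.Theory.
Set Implicit Arguments. Unset Strict Implicit. Unset Printing Implicit Defensive.
Section Grp.
Variable X : finType.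
Variable Om : finType.
Local Open Scope group_scope.
Implicit Types (f : X -> {perm Om}) (u v w : word X) (s t : {perm Om}).

Lemma ev_cat f u v : ev_word f (u ++ v) = (ev_word f u * ev_word f v)%g.
Proof. by elim: u => [|a u IH] /=; rewrite ?mul1g // IH mulgA. Qed.

Lemma ev_red_step f a (s : word X) :
  ev_word f (red_step a s) = (ev_letter f a * ev_word f s)%g.
Proof.
case: s => [|b s] //=.
case: ifP => // /andP [/eqP e1 e2].
rewrite mulgA /ev_letter e1.
have -> : b.2 = ~~ a.2 by case: (b.2) (a.2) e2 => [] [].
by case: (a.2) => /=; rewrite ?mulVg ?mulgV mul1g.
Qed.

Lemma ev_reduce f w : ev_word f (reduce w) = ev_word f w.
Proof.
by elim: w => [|a w IH] //=; rewrite ev_red_step -IH.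
Qed.

Lemma ev_freely f u v : freely_eq u v -> ev_word f u = ev_word f v.
Proof. by move=> e; rewrite -ev_reduce e ev_reduce. Qed.

Lemma ev_inv f w : ev_word f (inv_word w) = ((ev_word f w)^-1)%g.
Proof.
elim: w => [|a w IH] /=; first by rewrite invg1.
rewrite /inv_word /= rev_cons -cats1 ev_cat -/(inv_word w) IH /= mulg1 invMg.
by congr (_ * _)%g; rewrite /ev_letter /=; case: (a.2) => //=; rewrite invgK.
Qed.

Definition supp (s : {perm Om}) := [set o | s o != o].

Lemma supp_mul s t : (#|supp (s * t)| <= #|supp s| + #|supp t|)%N.
Proof.
have sub : supp (s*t) \subset supp s :|: supp t.
  apply/fintype.subsetP => o; rewrite !inE permM.
  by case: (eqVneq (s o) o) => [->|] //=; rewrite orbF.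
apply: (leq_trans (subset_leq_card sub)).
by rewrite cardsU leq_subr.
Qed.

Lemma supp_conj (u : {perm Om}) s : #|supp (u * s * u^-1)| = #|supp s|.
Proof.
rewrite -(card_preimset (supp s) (@perm_inj _ u)).
apply: eq_card => o; rewrite !inE !permM.
apply/idP/idP; apply: contra => /eqP e.
  by rewrite e permK.
by apply/eqP; apply: (@perm_inj _ u^-1); rewrite e permK.
Qed.

Lemma supp_inv s : #|supp (s^-1)| = #|supp s|.
Proof.
rewrite -(card_preimset (supp s) (@perm_inj _ (s^-1)%g)).
apply: eq_card => o; rewrite !inE -permM mulVg perm1.
by rewrite eq_sym.
Qed.

Lemma supp1 : #|supp 1| = 0%N.
Proof. by apply/eqP; rewrite cards_eq0; apply/eqP/setP => o; rewrite !inE perm1 eqxx. Qed.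

Lemma supp_flatten f (l : seq (word X * word X * bool)) :
  (#|supp (ev_word f (flatten (map (@conj_rel X) l)))| <=
    \sum_(p <- l) #|supp (ev_word f p.1.2)|)%N.
Proof.
elim: l => [|p l IH] /=; first by rewrite big_nil supp1.
rewrite big_cons ev_cat; apply: (leq_trans (supp_mul _ _)); apply: leq_add => //.
rewrite /conj_rel !ev_cat ev_inv mulgA supp_conj.
by case: (p.2); rewrite ?ev_inv ?supp_inv.
Qed.

End Grp.
Section Area.
Variable X : finType.
Variable R : seq (word X).
Implicit Types (u v w : word X).

Lemma has_area_transfer w w' k : reduce w = reduce w' ->
  has_area R w k -> has_area R w' k.
Proof.
by move=> e [l [h1 h2 h3]]; exists l; split => //; rewrite /freely_eq -e.
Qed.

Lemma is_area_transfer w w' k : reduce w = reduce w' ->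
  is_area R w k -> is_area R w' k.
Proof.
move=> e [h1 h2]; split; first exact: has_area_transfer h1.
by move=> k' /(has_area_transfer (esym e)); apply: h2.
Qed.

Lemma is_area_uniq w m m' : is_area R w m -> is_area R w m' -> m = m'.
Proof.
by move=> [a1 b1] [a2 b2]; apply/eqP; rewrite eqn_leq b1 // b2.
Qed.

Lemma exists_area w : in_ker R w -> exists m, is_area R w m.
Proof.
move=> [m]; elim/ltn_ind: m => m IH hm.
case: (Classical_Prop.classic (exists2 k, (k < m)%N & has_area R w k)).
  by move=> [k kl hk]; exact: IH kl hk.
move=> nk; exists m; split => // k hk.
by rewrite leqNgt; apply/negP => kl; apply: nk; exists k.
Qed.

Lemma area_nil : is_area R [::] 0.
Proof.
split; last by [].
by exists [::]; split.
Qed.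

Lemma bound_list (L : seq (word X)) :
  exists B, forall w m, reduce w \in L -> is_area R w m -> (m <= B)%N.
Proof.
elim: L => [|s L [B HB]]; first by exists 0%N.
case: (Classical_Prop.classic (exists w0 m0, reduce w0 = s /\ is_area R w0 m0)).
  move=> [w0 [m0 [e0 h0]]]; exists (maxn B m0) => w m; rewrite inE.
  case/orP => [/eqP e|wL] h.
    rewrite (is_area_uniq h (is_area_transfer (esym _) h0)) ?leq_maxr //.
    by rewrite e.
  by rewrite leq_max (HB w)...
move=> nw; exists B => w m; rewrite inE; case/orP => [/eqP e|wL] h.
  by exfalso; apply: nw; exists w, m.
exact: HB wL h.
Qed.

Definition all_words (n : nat) : seq (word X) :=
  flatten [seq [seq tval t | t <- enum {: k.-tuple (X * bool)}] | k <- iota 0 n.+1].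

Lemma all_wordsP n (s : word X) : (size s <= n)%N -> s \in all_words n.
Proof.
move=> hs; apply/flatten_mapP; exists (size s).
  by rewrite mem_iota add0n ltnS hs.
by apply: (@map_f _ _ (@tval (size s) _) _ (in_tuple s)); rewrite mem_enum.
Qed.

Lemma area_bound n : exists B, forall w m, (wlen w <= n)%N -> is_area R w m -> (m <= B)%N.
Proof.
have [B HB] := bound_list (all_words n).
by exists B => w m hw; apply: HB; apply: all_wordsP.
Qed.

End Area.
Local Open Scope classical_set_scope.
Local Open Scope ring_scope.

Section Main.
Variable Rr : realType.
Variable X : finType.
Variable R : seq (word X).

Lemma dist1E (Om : finType) (s : {perm Om}) :
  dist s 1%g = (#|supp s|%:R / #|Om|%:R : Rr).
Proof.
rewrite /dist; congr (_%:R / _); apply: eq_card => o; by rewrite !inE perm1.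
Qed.

Lemma dist_le1 (Om : finType) (s : {perm Om}) : (0 < #|Om|)%N ->
  dist s 1%g <= (1 : Rr).
Proof.
move=> h; rewrite dist1E ler_pdivrMr ?ltr0n // mul1r ler_nat.
exact: max_card.
Qed.

Lemma distss (Om : finType) (s : {perm Om}) : dist s s = (0 : Rr).
Proof.
rewrite /dist; set A := finset.finset _.
have -> : A = finset.set0 by apply/setP => o; rewrite !inE eqxx.
by rewrite cards0 mul0r.
Qed.

Lemma sum_lt (T : eqType) (l : seq T) (F : T -> Rr) (c : Rr) : l != [::] ->
  (forall p, p \in l -> F p < c) -> \sum_(p <- l) F p < (size l)%:R * c.
Proof.
elim: l => [|p l IH] // _ H.
rewrite big_cons /=.
case: l IH H => [|q l] IH H.
  by rewrite big_nil addr0 mul1r; apply: H; rewrite inE eqxx.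
rewrite -addn1 natrD mulrDl mul1r addrC; apply: ltrD; last by apply: H; rewrite inE eqxx.
apply: IH => // p' hp'; apply: H; by rewrite inE hp' orbT.
Qed.

Lemma key (d M x : Rr) E : 0 < d -> 0 < M -> good_pair R d E x ->
  (forall r, r \in E -> exists m, has_area R r m /\ m%:R <= M) ->
  good_pair R (d / M) R x.
Proof.
move=> d0 M0 good HE Om Om0 rho Hrho; apply: (good Om Om0 rho) => r rE.
have [m [[l [sl lR fe]] mM]] := HE r rE.
rewrite (ev_freely _ fe) dist1E.
have N0 : (0 : Rr) < #|Om|%:R by rewrite ltr0n.
case: (eqVneq l [::]) => [l0|ln0].
  by rewrite l0 /= supp1 mul0r.
apply: (le_lt_trans (y := (\sum_(p <- l) #|supp (ev_word rho p.1.2)|)%:R / #|Om|%:R)).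
  by rewrite ler_pM2r ?invr_gt0 // ler_nat supp_flatten.
rewrite natr_sum mulr_suml.
apply: (lt_le_trans (sum_lt (c := d / M) ln0 _)).
  move=> p pl; rewrite -dist1E; exact: Hrho (lR p pl).
rewrite sl mulrA ler_pdivrMr // mulrC ler_pM2l //.
Qed.


Definition SH (x : Rr) := [set v : Rr | exists d : Rr,
         [/\ (0 < d)%R, good_pair R d R x & v = (d^-1)%R]].

Lemma SH_lb (x : Rr) : has_lbound (SH x).
Proof. by exists 0 => v [d [d0 _ ->]]; rewrite invr_ge0 ltW. Qed.

Lemma H_le (x d : Rr) : 0 < d -> good_pair R d R x -> H_pres R x <= d^-1.
Proof.
move=> d0 g; apply: (ge_inf (SH_lb x)); by exists d.
Qed.

Lemma H0 (x : Rr) : (forall d', 0 < d' -> good_pair R d' R x) -> H_pres R x = 0.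
Proof.
move=> H; have ne : exists v, SH x v by exists 1; exists 1; rewrite invr1; split => //; apply: H.
have h0 : 0 <= H_pres R x.
  apply: lb_le_inf => // v [d [d0 _ ->]]; by rewrite invr_ge0 ltW.
apply/eqP; rewrite eq_le h0 andbT; rewrite leNgt; apply/negP => hp.
have := H_le (d := 2 / H_pres R x) _ (H _ _).
have p2 : 0 < 2 / H_pres R x by rewrite divr_gt0.
move=> /(_ p2 p2); rewrite invf_div.
rewrite ler_pdivlMr // -{2}(mulr1 (H_pres R x)) ler_pM2l //.
by rewrite leNgt ltr1n.
Qed.

Lemma good_trivial (d x : Rr) E : 0 < d -> 0 < x -> good_pair R d E x ->
  (forall r, r \in E -> has_area R r 0) -> forall d', good_pair R d' R x.
Proof.
move=> d0 x0 good HE d' Om Om0 rho _; apply: (good Om Om0 rho) => r rE.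
have [l [sl _ fe]] := HE r rE.
move/size0nil: sl => l0; rewrite (ev_freely _ fe) l0 /=.
by rewrite distss.
Qed.

Lemma dehn_ub (n : nat) w m : (wlen w <= n)%N -> in_ker R w -> is_area R w m ->
  (m%:R : Rr) <= Dehn_nat R n.
Proof.
move=> hw hk ha; have [B HB] := area_bound R n.
apply: ub_le_sup; last by exists w, m; split.
exists B%:R => v [w' [m' [_ hw' ha' ->]]]; rewrite ler_nat; exact: HB hw' ha'.
Qed.

Lemma dehn_ge0 n : (0 : Rr) <= Dehn_nat R n.
Proof.
apply: (dehn_ub (w := [::]) (m := 0%N)) => //; last exact: area_nil.
by exists 0%N; exact: (area_nil R).1.
Qed.

Lemma wlen_le_wnorm (E : seq (word X)) r : uniq E -> r \in E -> (wlen r <= wnorm E)%N.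
Proof. by move=> u rE; rewrite /wnorm (bigD1_seq r) //= leq_addr. Qed.

Lemma areas_E (E : seq (word X)) n : admissible_E R E -> (wnorm E <= n)%N ->
  forall r, r \in E -> exists m, is_area R r m /\ (m%:R : Rr) <= Dehn_nat R n.
Proof.
move=> [_ u ker] hn r rE.
have [m hm] := exists_area (ker r rE).
exists m; split => //; apply: dehn_ub hm; last exact: ker.
exact: leq_trans (wlen_le_wnorm u rE) hn.
Qed.

Lemma SH_ne (x d : Rr) E : 0 < d -> admissible_E R E -> good_pair R d E x ->
  exists v, SH x v.
Proof.
move=> d0 adm g.
have M0 : 0 < Dehn_nat R (wnorm E) + 1 :> Rr by rewrite ltr_wpDl ?dehn_ge0.
have := key d0 M0 g; set d' := d / _ => g'.
exists d'^-1, d'; split => //; first by rewrite divr_gt0.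
apply: g' => r rE; have [m [hm hmD]] := areas_E adm (leqnn _) rE.
exists m; split; first exact: hm.1.
by rewrite (le_trans hmD) // lerDl.
Qed.

Lemma G2 (x d : Rr) E n : 0 < x -> 0 < d -> admissible_E R E -> good_pair R d E x ->
  (wnorm E <= n)%N -> H_pres R x <= (wnorm E)%:R / d * Dehn_nat R n.
Proof.
move=> x0 d0 adm g hn.
have areas := areas_E adm hn.
have D0 := dehn_ge0 n.
case h: ((wnorm E == 0%N) || (Dehn_nat R n == 0 :> Rr)).
  rewrite H0; first by rewrite mulr_ge0 // divr_ge0 // ltW.
  move=> d' _; apply: (good_trivial d0 x0 g) => r rE.
  case/orP: h => [/eqP w0|/eqP D00].
    exists [::]; split => //.
    have := wlen_le_wnorm (let: And3 _ u _ := adm in u) rE; rewrite w0 leqn0 /wlen => /eqP/size0nil.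
    by rewrite /freely_eq /= => ->.
  have [m [hm hmD]] := areas r rE.
  move: hmD; rewrite D00 lern0 => /eqP m0.
  by move: hm; rewrite m0 => -[].
move/negbT: h; rewrite negb_or => /andP [w0 Dn0].
have Dp : 0 < Dehn_nat R n :> Rr by rewrite lt0r Dn0.
apply: (le_trans (@H_le x (d / Dehn_nat R n) _ _)).
- by rewrite divr_gt0.
- apply: (key d0 Dp g) => r rE; have [m [hm hmD]] := areas r rE.
  by exists m; split => //; exact: hm.1.
rewrite invf_div mulrAC ler_pM2r ?invr_gt0 //.
by rewrite ler_peMl // ler1n lt0n w0.
Qed.

Definition SF (x : Rr) := [set v : Rr | exists (d : Rr) (E : seq (word X)),
         [/\ (0 < d)%R, (d <= 1)%R, admissible_E R E, good_pair R d E x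
           & v = ((wnorm E)%:R / d)%R]].

Lemma SF_lb (x : Rr) : has_lbound (SF x).
Proof.
exists 0 => v [d [E [d0 _ _ _ ->]]]; by rewrite divr_ge0 // ltW.
Qed.

End Main.

Theorem proposition2p9 (Rr : realType) (X : finType) (R : seq (word X)) :
  all (@reduced X) R -> uniq R -> @stable_pres X Rr R ->
  ((~ pi_is_iso R) ->
     forall x : Rr, (1 <= x)%R ->
       ((F_pi R x / (wnorm R)%:R <= H_pres R x)%R /\
        (H_pres R x <= F_pi R x * Dehn R (F_pi R x))%R))
  /\
  (pi_is_iso R -> forall x : Rr, (1 <= x)%R -> H_pres R x = 0%R).
Proof.
move=> allR uR stab; split; last first.
  move=> iso x x1; apply: H0 => d' d'0 Om Om0 rho _; exists rho; split.
    by move=> w /iso hw; rewrite -ev_reduce hw.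
  by move=> y; rewrite distss invr_gt0 (lt_le_trans ltr01 x1).
move=> _ x x1; have x0 : 0 < x := lt_le_trans ltr01 x1.
have [d0 [E0 [d00 d01 adm0 g0]]] := stab x x0.
have SFne : exists v, SF R x v by exists ((wnorm E0)%:R / d0), d0, E0; split.
have SFlb := SF_lb R x.
have F0 : 0 <= F_pi R x.
  apply: lb_le_inf => // v [d [E [dp _ _ _ ->]]]; by rewrite divr_ge0 // ltW.
have SHne := SH_ne d00 adm0 g0.
split.
  apply: lb_le_inf => // v [d [dpos gd ->]].
  have Radm : admissible_E R R.
    split => // r rR; exists 1%N, [:: ([::], r, false)]; split => //.
      by move=> p; rewrite inE => /eqP ->.
    by rewrite /freely_eq /conj_rel /= !cats0.
  case: (lerP d 1) => [d1|d1].
    have hF : F_pi R x <= (wnorm R)%:R / d.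
      by apply: (ge_inf SFlb); exists d, R; split.
    case: (eqVneq (wnorm R) 0%N) => [w0|wn0].
      by rewrite w0 invr0 mulr0 invr_ge0 ltW.
    by rewrite ler_pdivrMr ?ltr0n ?lt0n // mulrC.
  have hF : F_pi R x <= 0.
    apply: (ge_inf SFlb); exists 1, [::]; split => //; last first.
      by rewrite /wnorm big_nil mul0r.
    move=> Om Om0 rho _; apply: (gd Om Om0 rho) => r rR.
    by apply: le_lt_trans d1; apply: dist_le1.
  have -> : F_pi R x = 0 by apply/eqP; rewrite eq_le hF F0.
  by rewrite mul0r invr_ge0 ltW // (lt_trans ltr01 d1).
rewrite /Dehn; set n := Num.truncn (F_pi R x); set D := Dehn_nat R n.
have D0 : 0 <= D := dehn_ge0 Rr R n.
have D1 : 0 < D + 1 by rewrite ltr_wpDl.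
apply/ler_addgt0Pr => e e0.
have Fn : F_pi R x < n.+1%:R := truncnS_gt _.
set q := e / (D + 1).
have q0 : 0 < q by rewrite divr_gt0.
set dl := Num.min (n.+1%:R - F_pi R x) q.
have dl0 : 0 < dl by rewrite lt_min q0 subr_gt0 Fn.
have [v [d [E [dpos d1 adm gd ->]]] vlt] := inf_adherent dl0 (conj SFne SFlb).
have wle : (wnorm E)%:R <= (wnorm E)%:R / d.
  by rewrite ler_pdivlMr // ler_piMr.
have hn : (wnorm E <= n)%N.
  rewrite -ltnS -(ltr_nat Rr); apply: (le_lt_trans wle); apply: (lt_le_trans vlt).
  by rewrite -lerBrDl ge_min lexx.
apply: (le_trans (G2 x0 dpos adm gd hn)).
apply: (le_trans (y := (F_pi R x + q) * D)).
  apply: ler_wpM2r => //; apply: ltW; apply: (lt_le_trans vlt).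
  by rewrite lerD2l ge_min lexx orbT.
rewrite mulrDl lerD2l /q mulrAC ler_pdivrMr // ler_pM2l // lerDl.
exact: ler01.
Qed.
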